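(* Let $N_{\mathsf s}\ge1$ be a fixed integer, $\beta\in(0,\infty)$, and for each integer $N_{\mathsf h}\ge1$ set $N=N_{\mathsf s}N_{\mathsf h}$ and let $K=K_N$ be a positive integer with $K_N/N\to\beta$ as $N_{\mathsf h}\to\infty$. Let $\boldsymbol{S}\in\mathbb{R}^{N\times K}$ have independent columns, each an $(N_{\mathsf s},N_{\mathsf h})$-sequence. Then the normalized rank $r_N:=\frac1N\operatorname{rank}\boldsymbol{S}$ satisfies, in probability, the asymptotic upper bound \[ r\le \min\{\beta,\,1-e^{-N_{\mathsf s}\beta}\}, \] that is, for every $\varepsilon>0$, $\Pr\big(r_N>\min\{\beta,1-e^{-N_{\mathsf s}\beta}\}+\varepsilon\big)\to0$ as $N\to\infty$.
   Context: An $(N_{\mathsf s},N_{\mathsf h})$-sequence is a random vector $\boldsymbol{s}\in\mathbb{R}^N$, $N=N_{\mathsf s}N_{\mathsf h}$, such that for each $m=1,\dots,N_{\mathsf s}$ the block $(s_{1+(m-1)N_{\mathsf h}},\dots,s_{mN_{\mathsf h}})$ has exactly one nonzero entry, whose position within the block is uniform and whose value is $\pm1/\sqrt{N_{\mathsf s}}$ with equal probability, all these choices being independent across blocks (so $\|\boldsymbol{s}\|=1$). *)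

(* Defs.v *)
From HB Require Import structures.
From mathcomp Require Import all_boot all_order all_algebra.
From mathcomp Require Import all_classical all_reals all_analysis.
Set Implicit Arguments. Unset Strict Implicit. Unset Printing Implicit Defensive.
Import Order.TTheory GRing.Theory Num.Theory.
Local Open Scope ring_scope.

(* An outcome of the random choices for a matrix with K columns, each an
   (Ns,Nh)-sequence: for each column k and each block m, the position
   (in 'I_Nh) of the nonzero entry and its sign (true = +, false = -). *)
Definition outcome (Ns Nh K : nat) : finType :=
  {ffun 'I_K -> {ffun 'I_Ns -> 'I_Nh * bool}}.

(* The matrix S in R^{N x K}, N = Ns*Nh. Row index i = m*Nh + j is entry j
   of block m. Column k has, in block m, the value +-1/sqrt(Ns) at the
   chosen position and 0 elsewhere. *)
Definition seqmx (R : realType) (Ns Nh K : nat) (w : outcome Ns Nh K)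
  : 'M[R]_(Ns * Nh, K) :=
  \matrix_(i, k) \sum_(m < Ns)
     (if (nat_of_ord i == m * Nh + (w k m).1)%N
      then (if (w k m).2 then 1 else -1) / Num.sqrt (Ns%:R)
      else 0).

(* Probability under the uniform distribution on outcomes, i.e. all
   positions and signs independent and uniform (independent columns). *)
Definition prob (R : realType) (Ns Nh K : nat) (E : pred (outcome Ns Nh K)) : R :=
  (#|E|%:R) / (#|outcome Ns Nh K|%:R).

Definition normrank (R : realType) (Ns Nh K : nat) (w : outcome Ns Nh K) : R :=
  (\rank (seqmx R w))%:R / (Ns * Nh)%:R.

(* Main.v *)
Require Import Defs.
From HB Require Import structures.
From mathcomp Require Import all_boot all_order all_algebra.
From mathcomp Require Import all_classical all_reals all_analysis.
From mathcomp Require Import ring lra.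
Import Order.TTheory GRing.Theory Num.Theory.
Import numFieldNormedType.Exports.

Local Open Scope ring_scope.
Set Implicit Arguments. Unset Strict Implicit. Unset Printing Implicit Defensive.
Definition Arow (Ns Nh : nat) (i : nat) : {set {ffun 'I_Ns -> 'I_Nh * bool}} :=
  [set t : {ffun 'I_Ns -> 'I_Nh * bool} | [forall m : 'I_Ns, (m * Nh + (t m).1 != i)%N]].


Lemma rowpos_eq (Nh m j i : nat) : (0 < Nh)%N -> (j < Nh)%N ->
  (m * Nh + j == i)%N = (m == i %/ Nh)%N && (j == i %% Nh)%N.
Proof.
move=> hN hj; apply/eqP/andP.
  move=> <-; rewrite divnMDl // divn_small // addn0 modnMDl modn_small //.
case=> /eqP -> /eqP ->; by rewrite -divn_eq.
Qed.

Lemma card_col (Nh m i : nat) : (0 < Nh)%N ->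
  #|[pred j : 'I_Nh | (m * Nh + j == i)%N]| = (m == i %/ Nh)%N.
Proof.
move=> hN.
case: eqP => hm.
  have lt : (i %% Nh < Nh)%N by rewrite ltn_mod.
  rewrite /= -(card1 (Ordinal lt)); apply: eq_card => j.
  rewrite !inE rowpos_eq // hm eqxx /=.
  by [].
rewrite /=; apply: eq_card0 => j; rewrite !inE rowpos_eq //.
by move/eqP: hm => /negbTE ->.
Qed.

Lemma card_fst (Nh : nat) (P : pred 'I_Nh) :
  #|[pred p : 'I_Nh * bool | P p.1]| = (#|P| * 2)%N.
Proof.
rewrite -(card_bool) -cardX; apply: eq_card => -[j b].
by rewrite !inE andbT.
Qed.

Lemma card_fam (n : nat) (X : finType) (G : 'I_n -> pred X) :
  #|[set t : {ffun 'I_n -> X} | [forall m, t m \in G m]]| = (\prod_m #|G m|)%N.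
Proof.
rewrite (@eq_card _ _ (family G)); last first.
  by move=> t; rewrite !inE.
by rewrite card_family foldrE big_map big_enum.
Qed.

Lemma card_fam_ratio (R : realType) (n : nat) (X : finType) (G : 'I_n -> pred X) :
  (0 < #|X|)%N ->
  #|[set t : {ffun 'I_n -> X} | [forall m, t m \in G m]]|%:R / #|{ffun 'I_n -> X}|%:R
  = \prod_m (#|G m|%:R / #|X|%:R : R).
Proof.
move=> hX.
rewrite card_fam card_ffun card_ord natr_prod natrX.
by rewrite prodf_div prodr_const card_ord.
Qed.

Lemma card_col1 (Nh m i : nat) : (0 < Nh)%N ->
  (#|[pred j : 'I_Nh | (m * Nh + j != i)%N]| + (m == i %/ Nh) = Nh)%N.
Proof.
move=> hN.
rewrite -(card_col m i hN).
transitivity (#|[pred j : 'I_Nh | (m * Nh + j != i)%N]| + #|[predC [pred j : 'I_Nh | (m * Nh + j != i)%N]]|)%N; last by rewrite cardC card_ord.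
congr (_ + _); apply: eq_card => j; by rewrite !inE negbK.
Qed.

Lemma card_col2 (Nh m i i' : nat) : (0 < Nh)%N -> i != i' ->
  (#|[pred j : 'I_Nh | (m * Nh + j != i)%N && (m * Nh + j != i')%N]|
    + (m == i %/ Nh) + (m == i' %/ Nh) = Nh)%N.
Proof.
move=> hN hi.
rewrite -(card_col m i hN) -(card_col m i' hN) -addnA.
rewrite -(cardUI [pred j : 'I_Nh | (m * Nh + j == i)%N] [pred j : 'I_Nh | (m * Nh + j == i')%N]).
rewrite (@eq_card0 _ [predI _ & _]); last first.
  move=> j; rewrite !inE; apply/negP => /andP [/eqP h1 /eqP h2].
  by move: hi; rewrite -h1 -h2 eqxx.
rewrite addn0.
transitivity (#|[pred j : 'I_Nh | (m * Nh + j != i)%N && (m * Nh + j != i')%N]| + #|[predC [pred j : 'I_Nh | (m * Nh + j != i)%N && (m * Nh + j != i')%N]]|)%N; last by rewrite cardC card_ord.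
congr (_ + _); apply: eq_card => j; by rewrite !inE negb_and !negbK.
Qed.

Definition Tsp (Ns Nh : nat) := {ffun 'I_Ns -> 'I_Nh * bool}.

Lemma card_X (Nh : nat) : #|{: 'I_Nh * bool}| = (Nh * 2)%N.
Proof. by rewrite card_prod card_ord card_bool. Qed.

Lemma prod_onehot (R : realType) (Ns Nh i : nat) : (0 < Nh)%N -> (i < Ns * Nh)%N ->
  \prod_(m < Ns) (1 - (nat_of_ord m == i %/ Nh)%N%:R / Nh%:R) = 1 - 1 / (Nh%:R : R).
Proof.
move=> hN hi.
have lt : (i %/ Nh < Ns)%N by rewrite ltn_divLR.
rewrite (bigD1 (Ordinal lt)) //= eqxx big1 ?mulr1 // => m hm.
have -> : (nat_of_ord m == i %/ Nh)%N = false.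
  by apply/negbTE; apply: contra hm => /eqP h; apply/eqP/val_inj.
by rewrite mul0r subr0.
Qed.

Lemma Arow_ratio (R : realType) (Ns Nh i : nat) : (0 < Nh)%N -> (i < Ns * Nh)%N ->
  #|Arow Ns Nh i|%:R / #|{: Tsp Ns Nh}|%:R = 1 - 1 / (Nh%:R : R).
Proof.
move=> hN hi.
pose G := fun m : 'I_Ns => [pred p : 'I_Nh * bool | (m * Nh + p.1 != i)%N].
have -> : Arow Ns Nh i = [set t : Tsp Ns Nh | [forall m, t m \in G m]].
  by apply/setP => t; rewrite !inE.
rewrite card_fam_ratio ?card_X ?muln_gt0 ?hN //.
rewrite -(prod_onehot R hN hi); apply: eq_bigr => m _.
have -> : #|G m| = (#|[pred j : 'I_Nh | (m * Nh + j != i)%N]| * 2)%N.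
  by rewrite -card_fst; apply: eq_card => p; rewrite !inE.
have e := card_col1 m i hN.
have eR : (#|[pred j : 'I_Nh | (m * Nh + j != i)%N]|%:R : R) = Nh%:R - (nat_of_ord m == i %/ Nh)%N%:R.
  have e' : (#|[pred j : 'I_Nh | (m * Nh + j != i)%N]|%:R + (nat_of_ord m == i %/ Nh)%N%:R : R) = Nh%:R.
    by rewrite -natrD e.
  by rewrite -e' addrK.
have hNR : (Nh%:R : R) != 0 by rewrite pnatr_eq0 -lt0n.
rewrite natrM eR natrM; field; by rewrite hNR.
Qed.

Lemma Arow2_ratio (R : realType) (Ns Nh i i' : nat) : (0 < Nh)%N ->
  (i < Ns * Nh)%N -> (i' < Ns * Nh)%N -> i != i' ->
  #|Arow Ns Nh i :&: Arow Ns Nh i'|%:R / #|{: Tsp Ns Nh}|%:R <= (1 - 1 / (Nh%:R : R)) ^+ 2.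
Proof.
move=> hN hi hi' hii.
pose G := fun m : 'I_Ns => [pred p : 'I_Nh * bool | (m * Nh + p.1 != i)%N && (m * Nh + p.1 != i')%N].
have -> : Arow Ns Nh i :&: Arow Ns Nh i' = [set t : Tsp Ns Nh | [forall m, t m \in G m]].
  apply/setP => t; rewrite !inE; apply/andP/forallP => [[/forallP h1 /forallP h2] m|h].
    by rewrite inE h1 h2.
  by split; apply/forallP => m; have := h m; rewrite inE => /andP [].
rewrite card_fam_ratio ?card_X ?muln_gt0 ?hN //.
rewrite expr2 -{1}(prod_onehot R hN hi) -(prod_onehot R hN hi') -big_split /=.
apply: ler_prod => m _.
have -> : #|G m| = (#|[pred j : 'I_Nh | (m * Nh + j != i)%N && (m * Nh + j != i')%N]| * 2)%N.
  by rewrite -card_fst; apply: eq_card => p; rewrite !inE.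
have e := card_col2 m hN hii.
set c := #|_|.
set x := (nat_of_ord m == i %/ Nh)%N.
set x' := (nat_of_ord m == i' %/ Nh)%N.
have e' : (c%:R + x%:R + x'%:R : R) = Nh%:R by rewrite -!natrD e.
have hNR : (0 : R) < Nh%:R by rewrite ltr0n.
have hx : (0 : R) <= x%:R by [].
have hx' : (0 : R) <= x'%:R by [].
have hc : (0 : R) <= c%:R by [].
have -> : (c * 2)%:R / (Nh * 2)%:R = 1 - x%:R / Nh%:R - x'%:R / (Nh%:R : R).
  rewrite !natrM -e'; field.
  by rewrite e' gt_eqF.
have hcN : 1 - x%:R / Nh%:R - x'%:R / (Nh%:R : R) = c%:R / Nh%:R.
  rewrite -e'; field; by rewrite e' gt_eqF.
rewrite hcN divr_ge0 //= -hcN.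
have ha : 0 <= x%:R / (Nh%:R : R) by rewrite divr_ge0 // ltW.
have hb : 0 <= x'%:R / (Nh%:R : R) by rewrite divr_ge0 // ltW.
have hab := mulr_ge0 ha hb.
set a := x%:R / _ in ha hab *; set b := x'%:R / _ in hb hab *.
nra.
Qed.

Definition Zc (Ns Nh K : nat) (w : outcome Ns Nh K) : nat :=
  #|[pred i : 'I_(Ns * Nh) | [forall k, w k \in Arow Ns Nh i]]|.

Lemma rank_le_occ (R : realType) Ns Nh K (w : outcome Ns Nh K) :
  (\rank (seqmx R w) <= #|[pred i : 'I_(Ns * Nh) | ~~ [forall k, w k \in Arow Ns Nh i]]|)%N.
Proof.
set A := seqmx R w.
set P := [pred i : 'I_(Ns * Nh) | ~~ [forall k, w k \in Arow Ns Nh i]].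
have sub : (A <= \sum_(i | P i) <<row i A>>)%MS.
  apply/row_subP => i.
  case Pi: (P i).
    by apply: (sumsmx_sup i) => //; rewrite genmxE.
  have -> : row i A = 0.
    apply/rowP => k; rewrite !mxE.
    apply: big1 => m _.
    move: Pi; rewrite /P inE => /negbFE => /forallP /(_ k).
    rewrite inE => /forallP /(_ m).
    by rewrite eq_sym => /negbTE ->.
  exact: sub0mx.
apply: (leq_trans (mxrankS sub)).
apply: (leq_trans (mxrank_sum_leqif _)).
rewrite -sum1_card.
apply: leq_sum => i _.
have := rank_leq_row (row i A); rewrite -(mxrank_gen (row i A)); exact.
Qed.

Lemma cardR (R : realType) (T : finType) (P : pred T) :
  (#|P|%:R : R) = \sum_x (x \in P)%:R.
Proof.
rewrite -sum1_card natr_sum big_mkcond /=; apply: eq_bigr => x _.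
by case: (x \in P).
Qed.

Lemma card_allin Ns Nh K (B : {set Tsp Ns Nh}) :
  #|[set w : outcome Ns Nh K | [forall k, w k \in B]]| = (#|B| ^ K)%N.
Proof.
rewrite (card_fam (fun _ : 'I_K => mem B)).
by rewrite prod_nat_const card_ord.
Qed.

Lemma card_outcome Ns Nh K : #|{: outcome Ns Nh K}| = (#|{: Tsp Ns Nh}| ^ K)%N.
Proof. by rewrite card_ffun card_ord. Qed.

Lemma sumZ (R : realType) Ns Nh K :
  \sum_(w : outcome Ns Nh K) ((Zc w)%:R : R) =
  \sum_(i < Ns * Nh) ((#|Arow Ns Nh i| ^ K)%N%:R).
Proof.
under eq_bigr => w _ do rewrite /Zc cardR.
under eq_bigr => w _ do under eq_bigr => i _ do rewrite inE.
rewrite exchange_big /=; apply: eq_bigr => i _.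
rewrite -card_allin cardR; apply: eq_bigr => w _.
by rewrite !inE.
Qed.

Lemma sumZ2 (R : realType) Ns Nh K :
  \sum_(w : outcome Ns Nh K) ((Zc w)%:R ^+ 2 : R) =
  \sum_(i < Ns * Nh) \sum_(i' < Ns * Nh)
     ((#|Arow Ns Nh i :&: Arow Ns Nh i'| ^ K)%N%:R).
Proof.
under eq_bigr => w _ do rewrite /Zc cardR.
under eq_bigr => w _ do under eq_bigr => i _ do rewrite inE.
under eq_bigr => w _ do rewrite expr2 mulr_suml.
rewrite exchange_big /=; apply: eq_bigr => i _.
under eq_bigr => w _ do rewrite mulr_sumr.
rewrite exchange_big /=; apply: eq_bigr => i' _.
rewrite -card_allin cardR; apply: eq_bigr => w _.
rewrite !inE -natrM mulnb; congr ((_ : bool)%:R).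
apply/andP/forallP => [[/forallP h1 /forallP h2] k|h].
  by rewrite inE h1 h2.
by split; apply/forallP => k; have := h k; rewrite inE => /andP [].
Qed.

Lemma cheb (R : realType) (T : finType) (f : T -> R) (mu t : R) : 0 < t ->
  #|[pred x | f x < mu - t]|%:R * t ^+ 2 <= \sum_x (f x - mu) ^+ 2.
Proof.
move=> ht; rewrite cardR mulr_suml; apply: ler_sum => x _.
rewrite inE /=. case: (f x < mu - t) /idP => h.
  rewrite mul1r; nra.
by rewrite mul0r sqr_ge0.
Qed.

Lemma sum_sq_expand (R : realType) (T : finType) (f : T -> R) (mu : R) :
  \sum_x (f x - mu) ^+ 2 = \sum_x f x ^+ 2 - 2 * mu * \sum_x f x + mu ^+ 2 *+ #|T|.
Proof.
rewrite (eq_bigr (fun x => f x ^+ 2 - 2 * mu * f x + mu ^+ 2)); last by move=> x _; ring.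
rewrite big_split big_split /= sumrN -mulr_sumr sumr_const.
by [].
Qed.

Lemma natX_ratio (R : realType) (c d K : nat) : (0 < d)%N ->
  ((c ^ K)%N%:R : R) = (c%:R / d%:R) ^+ K * (d ^ K)%N%:R.
Proof.
move=> hd; rewrite !natrX -exprMn mulrAC -mulrA divff ?mulr1 //.
by rewrite pnatr_eq0 -lt0n.
Qed.

Lemma card_Tsp_gt0 Ns Nh : (0 < Nh)%N -> (0 < #|{: Tsp Ns Nh}|)%N.
Proof. by move=> h; rewrite card_ffun card_X card_ord expn_gt0 muln_gt0 h. Qed.

Lemma EZ (R : realType) Ns Nh K : (0 < Nh)%N ->
  \sum_(w : outcome Ns Nh K) ((Zc w)%:R : R) =
  (#|{: Tsp Ns Nh}| ^ K)%N%:R * ((Ns * Nh)%:R * (1 - 1 / Nh%:R) ^+ K).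
Proof.
move=> hN; rewrite sumZ.
have hT := card_Tsp_gt0 Ns hN.
under eq_bigr => i _ do rewrite (natX_ratio _ _ _ hT) (Arow_ratio R hN (ltn_ord i)).
rewrite sumr_const card_ord -mulr_natl; ring.
Qed.

Lemma EZ2 (R : realType) Ns Nh K : (0 < Nh)%N ->
  \sum_(w : outcome Ns Nh K) ((Zc w)%:R ^+ 2 : R) <=
  (#|{: Tsp Ns Nh}| ^ K)%N%:R * ((Ns * Nh)%:R * (1 - 1 / Nh%:R) ^+ K
     + (Ns * Nh)%:R ^+ 2 * ((1 - 1 / (Nh%:R : R)) ^+ 2) ^+ K).
Proof.
move=> hN; rewrite sumZ2.
have hT := card_Tsp_gt0 Ns hN.
set W : R := (#|{: Tsp Ns Nh}| ^ K)%N%:R.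
set a : R := 1 - 1 / Nh%:R.
have ha0 : 0 <= a.
  rewrite /a subr_ge0 ler_pdivrMr ?mul1r ?ler1n ?ltr0n //.
have hW : 0 <= W by [].
have step : forall i i' : 'I_(Ns * Nh),
    ((#|Arow Ns Nh i :&: Arow Ns Nh i'| ^ K)%N%:R : R) <=
    (if i' == i then W * a ^+ K else 0) + W * (a ^+ 2) ^+ K.
  move=> i i'; rewrite (natX_ratio _ _ _ hT) -/W.
  have hr0 : 0 <= (#|Arow Ns Nh i :&: Arow Ns Nh i'|%:R / #|{: Tsp Ns Nh}|%:R : R).
    by rewrite divr_ge0.
  case: eqP => [->|hne].
    rewrite finset.setIid (Arow_ratio R hN (ltn_ord i)) -/a mulrC.
    rewrite lerDl mulr_ge0 // exprn_ge0 // exprn_ge0 //.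
  rewrite add0r mulrC ler_wpM2l //.
  apply: lerXn2r; rewrite ?nnegrE ?exprn_ge0 //.
  apply: Arow2_ratio => //.
  by apply/eqP => /val_inj h; apply: hne.
have step2 : forall i : 'I_(Ns * Nh),
    \sum_(i' < Ns * Nh) ((#|Arow Ns Nh i :&: Arow Ns Nh i'| ^ K)%N%:R : R) <=
    W * a ^+ K + (Ns * Nh)%:R * (W * (a ^+ 2) ^+ K).
  move=> i; apply: le_trans (ler_sum _ (fun i' _ => step i i')) _.
  rewrite big_split /= -big_mkcond big_pred1_eq sumr_const card_ord mulr_natl.
  by [].
apply: le_trans (ler_sum _ (fun i _ => step2 i)) _.
rewrite sumr_const card_ord.
rewrite le_eqVlt; apply/orP; left; apply/eqP; ring.
Qed.

Lemma occ_plus_Z Ns Nh K (w : outcome Ns Nh K) :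
  (#|[pred i : 'I_(Ns * Nh) | ~~ [forall k, w k \in Arow Ns Nh i]]| + Zc w = Ns * Nh)%N.
Proof.
rewrite addnC /Zc.
transitivity (#|[pred i : 'I_(Ns * Nh) | [forall k, w k \in Arow Ns Nh i]]| + #|[predC [pred i : 'I_(Ns * Nh) | [forall k, w k \in Arow Ns Nh i]]]|)%N; last by rewrite cardC card_ord.
by congr (_ + _); apply: eq_card => i; rewrite !inE.
Qed.

Lemma event_sub (R : realType) Ns Nh K (beta eps : R) (w : outcome Ns Nh K) :
  (0 < Ns)%N -> (0 < Nh)%N -> 0 < eps ->
  (K%:R / (Ns * Nh)%:R : R) <= beta + eps ->
  expR (- (Ns%:R * beta)) - eps / 2 <= (1 - 1 / (Nh%:R : R)) ^+ K ->
  Num.min beta (1 - expR (- (Ns%:R * beta))) + eps < normrank R w ->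
  (Zc w)%:R < (Ns * Nh)%:R * (1 - 1 / (Nh%:R : R)) ^+ K - (Ns * Nh)%:R * eps / 2.
Proof.
move=> hNs hNh he hK hq hE.
have hN : (0 : R) < (Ns * Nh)%:R by rewrite ltr0n muln_gt0 hNs hNh.
have rK : normrank R w <= K%:R / (Ns * Nh)%:R.
  by rewrite /normrank ler_pM2r ?invr_gt0 // ler_nat rank_leq_col.
have rZ : normrank R w <= ((Ns * Nh)%:R - (Zc w)%:R) / (Ns * Nh)%:R.
  rewrite /normrank ler_pM2r ?invr_gt0 //.
  have e1 := occ_plus_Z w.
  have e2 : ((Ns * Nh)%:R : R) - (Zc w)%:R = #|[pred i : 'I_(Ns * Nh) | ~~ [forall k, w k \in Arow Ns Nh i]]|%:R.
    by rewrite -[in LHS]e1 natrD addrK.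
  rewrite e2 ler_nat.
  exact: rank_le_occ.
set e := expR (- (Ns%:R * beta)) in hq hE *.
have h1 : 1 - e + eps < normrank R w.
  have [hb|hb] := leP beta (1 - e).
    rewrite (min_l hb) in hE; lra.
  by rewrite (min_r (ltW hb)) in hE.
have h2 : 1 - e + eps < ((Ns * Nh)%:R - (Zc w)%:R) / (Ns * Nh)%:R by lra.
rewrite ltr_pdivlMr // in h2.
set N := (Ns * Nh)%:R in hN h2 *.
set q := (1 - 1 / (Nh%:R : R)) ^+ K in hq *.
nra.
Qed.

Lemma prob_bound (R : realType) Ns Nh K (beta eps : R) :
  (0 < Ns)%N -> (0 < Nh)%N -> 0 < eps ->
  (K%:R / (Ns * Nh)%:R : R) <= beta + eps ->
  expR (- (Ns%:R * beta)) - eps / 2 <= (1 - 1 / (Nh%:R : R)) ^+ K ->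
  prob R (fun w : outcome Ns Nh K =>
       Num.min beta (1 - expR (- (Ns%:R * beta))) + eps < normrank R w)
  <= 4 / ((Ns * Nh)%:R * eps ^+ 2).
Proof.
move=> hNs hNh he hK hq.
have hN : (0 : R) < (Ns * Nh)%:R by rewrite ltr0n muln_gt0 hNs hNh.
set N := (Ns * Nh)%:R in hN *.
set a : R := 1 - 1 / Nh%:R.
have ha0 : 0 <= a.
  rewrite /a subr_ge0 ler_pdivrMr ?mul1r ?ler1n ?ltr0n //.
have ha1 : a <= 1 by rewrite /a lerBlDr lerDl divr_ge0.
have haK : a ^+ K <= 1 by apply: exprn_ile1.
set mu := N * a ^+ K.
set t := N * eps / 2.
have ht : 0 < t by rewrite /t divr_gt0 // mulr_gt0.
set P := [pred w : outcome Ns Nh K | (Zc w)%:R < mu - t].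
rewrite /prob; set E := (X in #|X|).
have hsub : (#|E| <= #|P|)%N.
  apply: subset_leq_card; apply/fintype.subsetP => w; rewrite !inE => hE.
  exact: (event_sub hNs hNh he hK hq hE).

have hcheb := cheb (fun w : outcome Ns Nh K => ((Zc w)%:R : R)) mu ht.
rewrite sum_sq_expand (EZ R Ns K hNh) card_outcome in hcheb.
have h2 := EZ2 R Ns K hNh.
set W : R := (#|{: Tsp Ns Nh}| ^ K)%N%:R in hcheb h2.
have hW : 0 < W by rewrite ltr0n expn_gt0 card_Tsp_gt0.
have hmu2 : (a ^+ 2) ^+ K = a ^+ K * a ^+ K by rewrite -exprM mulnC exprM expr2.
have hP : #|P|%:R * t ^+ 2 <= W * N.
  apply: (le_trans hcheb).
  rewrite -/a -/mu.
  apply: le_trans (lerD (lerD h2 (lexx _)) (lexx _)) _.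
  rewrite -/a hmu2.
  have hmuN : mu <= N by rewrite /mu ler_piMr // ltW.
  rewrite /mu -mulr_natr -/W -/N.
  have hWN : 0 < W * N by rewrite mulr_gt0.
  set x := a ^+ K in haK hmuN *.
  have hx0 : 0 <= x by rewrite exprn_ge0.
  have : W * N * x <= W * N by rewrite ler_piMr // ltW.
  move=> h; apply: le_trans _ h; rewrite le_eqVlt; apply/orP; left; apply/eqP.
  ring.
rewrite card_outcome -/W ler_pdivrMr //.
have hE : (#|E|%:R : R) <= #|P|%:R by rewrite ler_nat.
have ht2 : 0 < t ^+ 2 by rewrite exprn_gt0.
have hP' : (#|P|%:R : R) <= W * N / t ^+ 2 by rewrite ler_pdivlMr.
apply: (le_trans hE); apply: (le_trans hP').
rewrite le_eqVlt; apply/orP; left; apply/eqP.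
rewrite /t; field.
by rewrite gt_eqF // !pnatr_eq0 -!lt0n hNh hNs.
Qed.

Lemma expN_le (R : realType) (y : R) : 0 <= y -> expR (- y) <= 1 / (1 + y).
Proof.
move=> hy; rewrite expRN div1r.
rewrite lef_pV2 ?posrE ?expR_gt0 //; last by rewrite ltr_pwDl.
exact: expR_ge1Dx.
Qed.

Lemma a_pow_ge (R : realType) (Nh K : nat) : (1 < Nh)%N ->
  expR (- (K%:R / (Nh%:R - 1))) <= (1 - 1 / (Nh%:R : R)) ^+ K.
Proof.
move=> hN.
have hn : (1 : R) < Nh%:R by rewrite ltr1n.
have hn1 : (0 : R) < Nh%:R - 1 by rewrite subr_gt0.
have -> : - (K%:R / (Nh%:R - 1)) = K%:R * (- (1 / (Nh%:R - 1))) :> R.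
  by rewrite mulrN mulrA mulr1.
rewrite expRM_natl.
apply: lerXn2r; rewrite ?nnegrE ?expR_ge0 //.
  rewrite subr_ge0 ler_pdivrMr ?mul1r ?ltW //; lra.
apply: (le_trans (expN_le _)); first by rewrite divr_ge0 // ltW.
rewrite le_eqVlt; apply/orP; left; apply/eqP.
field.
by rewrite !gt_eqF // (lt_trans ltr01 hn).
Qed.

Lemma exp_lip (R : realType) (x0 y : R) : 0 <= x0 ->
  expR (- x0) - `|y - x0| <= expR (- y).
Proof.
move=> hx.
have [hy|hy] := leP y x0.
  apply: le_trans (_ : expR (- x0) <= _).
    by rewrite lerBlDr lerDl.
  by rewrite ler_expR lerN2.
have -> : - y = - x0 + - (y - x0) by ring.
rewrite expRD.
have h1 := expR_ge1Dx (- (y - x0)).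
have h2 : expR (- x0) <= 1 by rewrite -expR0 ler_expR lerNl oppr0.
have h3 := expR_gt0 (- x0).
rewrite gtr0_norm ?subr_gt0 //.
set E := expR (- x0) in h2 h3 *.
set F := expR (- (y - x0)) in h1 *.
have hyx : 0 < y - x0 by rewrite subr_gt0.
nra.
Qed.

Unset Implicit Arguments.
Local Open Scope classical_set_scope.

Theorem theorem2 (R : realType) (Ns : nat) (beta : R) (K : nat -> nat) :
  (0 < Ns)%N -> 0 < beta ->
  (forall Nh : nat, (0 < Nh)%N -> (0 < K Nh)%N) ->
  (fun Nh : nat => ((K Nh)%:R / (Ns * Nh)%:R : R)) @ \oo --> beta ->
  forall eps : R, 0 < eps ->
  (fun Nh : nat =>
     prob R (fun w : outcome Ns Nh (K Nh) =>
       Num.min beta (1 - expR (- (Ns%:R * beta))) + eps < normrank R w))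
    @ \oo --> (0 : R).
Proof.
move=> hNs hb _ hlim eps he.
have hD : (0 : R) < Ns%:R by rewrite ltr0n.
have hD1 : (1 : R) <= Ns%:R by rewrite ler1n.
set D : R := Ns%:R in hD hD1 *.
set dl : R := eps / (4 * D).
have hdl : 0 < dl by rewrite divr_gt0 // mulr_gt0.
have hDdl : D * dl = eps / 4.
  rewrite /dl; field; by rewrite gt_eqF.
have hdle : dl <= eps by nra.
apply/cvgrPdist_lt => e' he'.
move/cvgrPdist_lt: hlim => /(_ dl hdl) hu.
near=> n.
have Hu : `|beta - (K n)%:R / (Ns * n)%:R| < dl by near: n; exact: hu.
have Hn3 : (1 < n)%N by near: n; exact: nbhs_infty_gt.
have Hn1 : 4 * D * (beta + dl) / eps + 1 < n%:R by near: n; exact: nbhs_infty_gtr.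
have Hn2 : 4 / (D * eps ^+ 2 * e') < n%:R by near: n; exact: nbhs_infty_gtr.
have hn0 : (0 < n)%N by apply: ltnW.
have hnR1 : (1 : R) < n%:R by rewrite ltr1n.
have hN : ((Ns * n)%:R : R) = D * n%:R by rewrite natrM.
set nR : R := n%:R in Hn1 Hn2 hnR1 hN *.
set u : R := (K n)%:R / (Ns * n)%:R in Hu *.
have hnR0 : 0 < nR by lra.
have hKu : (K n)%:R = u * (D * nR).
  by rewrite /u hN mulfVK // gt_eqF // mulr_gt0.
have hu0 : 0 <= u by rewrite /u divr_ge0.
move: Hu; rewrite ltr_norml => /andP [Hu1 Hu2].
have hK : u <= beta + eps by lra.
set y : R := (K n)%:R / (nR - 1).
have hnR10 : 0 < nR - 1 by lra.
have hy : y * (nR - 1) = (K n)%:R by rewrite /y mulfVK // gt_eqF.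
have hw : (y - D * u) * (nR - 1) = D * u by rewrite mulrBl hy hKu; ring.
have hDu : D * u <= D * (beta + dl) by rewrite ler_wpM2l ?ltW //; lra.
have hr : 4 * D * (beta + dl) < (nR - 1) * eps.
  by rewrite -ltr_pdivrMr // ltrBrDr.
have hw1 : y - D * u < eps / 4 by nra.
have hw0 : 0 <= y - D * u by nra.
have hdist : `|y - D * beta| <= eps / 2.
  rewrite ler_norml; apply/andP; split; nra.
have hq : expR (- (D * beta)) - eps / 2 <= (1 - 1 / nR) ^+ K n.
  apply: le_trans (a_pow_ge R (K n) Hn3).
  apply: le_trans (exp_lip y (ltW (mulr_gt0 hD hb))).
  lra.
have hp := prob_bound hNs hn0 he hK hq.
have hp0 : 0 <= prob R (fun w : outcome Ns n (K n) =>
       Num.min beta (1 - expR (- (D * beta))) + eps < normrank R w).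
  by rewrite /prob divr_ge0.
rewrite sub0r normrN ger0_norm //.
apply: le_lt_trans hp _.
rewrite hN ltr_pdivrMr; last by rewrite !mulr_gt0 // exprn_gt0.
rewrite ltr_pdivrMr in Hn2; last by rewrite !mulr_gt0 // exprn_gt0.
nra.
Unshelve. all: end_near.
Qed.
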